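(* Let $A\in\mathbb R^{n\times n}$ and, for $W\succ0$, define $$v^*(A,W)=\inf_{P,\Pi}\ \tfrac12\log\det\Pi^{-1}+\tfrac12\log\det W\quad\text{s.t.}\quad\Pi\succ0,\ P\preceq APA^\top+W,\ \begin{bmatrix}P-\Pi & PA^\top\\ AP & APA^\top+W\end{bmatrix}\succeq0,$$ over symmetric $n\times n$ matrices $P,\Pi$. If $0\prec W_1\preceq W_2$, then $v^*(A,W_1)\le v^*(A,W_2)$.
   Context: Logarithms are base 2. *)

(* Defs.v *)
From HB Require Import structures.
From mathcomp Require Import all_boot all_order all_algebra.
From mathcomp Require Import all_classical all_reals all_analysis.
Set Implicit Arguments. Unset Strict Implicit. Unset Printing Implicit Defensive.
Import Order.TTheory GRing.Theory Num.Theory.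
Local Open Scope ring_scope.
Local Open Scope classical_set_scope.

(* Base-2 logarithm (the paper's convention). *)
Definition log2 {R : realType} (x : R) : R := ln x / ln 2.

Definition psdmx {R : realType} (n : nat) (M : 'M[R]_n) : Prop :=
  M^T = M /\ forall x : 'cV[R]_n, 0 <= (x^T *m M *m x) 0 0.

Definition pdmx {R : realType} (n : nat) (M : 'M[R]_n) : Prop :=
  M^T = M /\ forall x : 'cV[R]_n, x != 0 -> 0 < (x^T *m M *m x) 0 0.

Definition lemx {R : realType} (n : nat) (M N : 'M[R]_n) : Prop :=
  psdmx (N - M).

Definition vfeasible {R : realType} (n : nat) (A W P Pi : 'M[R]_n) : Prop :=
  [/\ P^T = P, Pi^T = Pi, pdmx Pi,
      lemx P (A *m P *m A^T + W) &
      psdmx (block_mx (P - Pi) (P *m A^T) (A *m P) (A *m P *m A^T + W))].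

Definition vobj {R : realType} (n : nat) (W Pi : 'M[R]_n) : R :=
  2^-1 * log2 (\det (invmx Pi)) + 2^-1 * log2 (\det W).

Definition vstar {R : realType} (n : nat) (A W : 'M[R]_n) : \bar R :=
  ereal_inf [set x : \bar R | exists P Pi : 'M[R]_n,
                 vfeasible A W P Pi /\ x = (vobj W Pi)%:E].

(* Main.v *)
Require Import Defs.
From HB Require Import structures.
From mathcomp Require Import all_boot all_order all_algebra.
From mathcomp Require Import all_classical all_reals all_analysis.
From mathcomp Require Import ring lra.
Import Order.TTheory GRing.Theory Num.Theory.
Local Open Scope ring_scope.
Set Implicit Arguments. Unset Strict Implicit.

Section Q.
Variable R : realType.
Definition qf {n} (M : 'M[R]_n) (x : 'cV[R]_n) : R := (x^T *m M *m x) 0 0.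

Lemma entD (A B : 'M[R]_1) : (A + B) 0 0 = A 0 0 + B 0 0.
Proof. by rewrite mxE. Qed.
Lemma entN (A : 'M[R]_1) : (- A) 0 0 = - A 0 0.
Proof. by rewrite mxE. Qed.

Lemma qf_block_ul m k (P : 'M[R]_m) (C : 'M[R]_(k,m)) (Q : 'M[R]_k) (x : 'cV[R]_m) (y : 'cV[R]_k) :
  P^T = P -> P \in unitmx ->
  qf (block_mx P C^T C Q) (col_mx x y) =
  qf P (x + invmx P *m C^T *m y) + qf (Q - C *m invmx P *m C^T) y.
Proof.
move=> sP uP; rewrite /qf.
have h0 : forall p (z : 'M[R]_(p,m)), z *m P *m invmx P = z.
  by move=> p z; rewrite -mulmxA mulmxV // mulmx1.
have h0' : forall p (z : 'M[R]_(p,m)), z *m invmx P *m P = z.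
  by move=> p z; rewrite -mulmxA mulVmx // mulmx1.
have hN : (invmx P *m C^T)^T = C *m invmx P.
  by rewrite trmx_mul trmxK trmx_inv sP.
rewrite tr_col_mx mul_row_block mul_row_col.
rewrite [(x + _)^T]raddfD /= trmx_mul hN !mulmxDl !mulmxDr !mulmxA.
rewrite !h0 !h0' ?mulmxN ?mulNmx ?mulmxA.

rewrite mulmxBl !entD ?entN; lra.
Qed.


Lemma qf_block_dr m k (P : 'M[R]_m) (C : 'M[R]_(k,m)) (Q : 'M[R]_k) (x : 'cV[R]_m) (y : 'cV[R]_k) :
  Q^T = Q -> Q \in unitmx ->
  qf (block_mx P C^T C Q) (col_mx x y) =
  qf (P - C^T *m invmx Q *m C) x + qf Q (y + invmx Q *m C *m x).
Proof.
move=> sQ uQ; rewrite /qf.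
have h0 : forall p (z : 'M[R]_(p,k)), z *m Q *m invmx Q = z.
  by move=> p z; rewrite -mulmxA mulmxV // mulmx1.
have h0' : forall p (z : 'M[R]_(p,k)), z *m invmx Q *m Q = z.
  by move=> p z; rewrite -mulmxA mulVmx // mulmx1.
have hN : (invmx Q *m C)^T = C^T *m invmx Q.
  by rewrite trmx_mul trmx_inv sQ.
rewrite tr_col_mx mul_row_block mul_row_col.
rewrite [(y + _)^T]raddfD /= trmx_mul hN !mulmxDl !mulmxDr !mulmxA.
rewrite !h0 !h0' ?mulmxN ?mulNmx ?mulmxA.
rewrite mulmxBl !entD ?entN; lra.
Qed.

Lemma qf_block_x0 m k (P : 'M[R]_m) (B : 'M[R]_(m,k)) (C : 'M[R]_(k,m)) (Q : 'M[R]_k) (x : 'cV[R]_m) :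
  qf (block_mx P B C Q) (col_mx x 0) = qf P x.
Proof.
by rewrite /qf tr_col_mx mul_row_block mul_row_col trmx0 !mul0mx !addr0 mulmx0 addr0.
Qed.

Lemma qfD n (A B : 'M[R]_n) x : qf (A + B) x = qf A x + qf B x.
Proof. by rewrite /qf mulmxDr mulmxDl entD. Qed.
Lemma qfN n (A : 'M[R]_n) x : qf (- A) x = - qf A x.
Proof. by rewrite /qf mulmxN mulNmx entN. Qed.
Lemma qfB n (A B : 'M[R]_n) x : qf (A - B) x = qf A x - qf B x.
Proof. by rewrite qfD qfN. Qed.
Lemma qf0 n (A : 'M[R]_n) : qf A 0 = 0.
Proof. by rewrite /qf mulmx0 mxE. Qed.
Lemma qf0m n (x : 'cV[R]_n) : qf 0 x = 0.
Proof. by rewrite /qf mulmx0 mul0mx mxE. Qed.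
Lemma qf_congr n p (A : 'M[R]_(p,n)) (X : 'M[R]_n) x : qf (A *m X *m A^T) x = qf X (A^T *m x).
Proof. by rewrite /qf trmx_mul trmxK !mulmxA. Qed.

Lemma det_block_ul m k (P : 'M[R]_m) (B : 'M[R]_(m,k)) (C : 'M[R]_(k,m)) (Q : 'M[R]_k) :
  P \in unitmx -> \det (block_mx P B C Q) = \det P * \det (Q - C *m invmx P *m B).
Proof.
move=> uP.
have -> : block_mx P B C Q = block_mx 1%:M 0 (C *m invmx P) 1%:M *m block_mx P B 0 (Q - C *m invmx P *m B).
  rewrite mulmx_block !mul1mx !mul0mx !addr0 -mulmxA mulVmx // mulmx1.
  by rewrite addrC subrK.
by rewrite det_mulmx det_lblock det_ublock !det1 !mul1r.
Qed.

Lemma det_block_dr m k (P : 'M[R]_m) (B : 'M[R]_(m,k)) (C : 'M[R]_(k,m)) (Q : 'M[R]_k) :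
  Q \in unitmx -> \det (block_mx P B C Q) = \det (P - B *m invmx Q *m C) * \det Q.
Proof.
move=> uQ.
have -> : block_mx P B C Q = block_mx 1%:M (B *m invmx Q) 0 1%:M *m block_mx (P - B *m invmx Q *m C) 0 C Q.
  rewrite mulmx_block !mul1mx !mul0mx ?add0r ?addr0 subrK -mulmxA mulVmx // mulmx1.
  done.
by rewrite det_mulmx det_lblock det_ublock !det1 !mul1r.
Qed.

Arguments qf_block_ul [m k] P C Q x y.
Arguments qf_block_dr [m k] P C Q x y.
Arguments qf_block_x0 [m k] P B C Q x.

Lemma lemxP n (X Y : 'M[R]_n) : X^T = X -> Y^T = Y ->
  lemx X Y <-> forall x, qf X x <= qf Y x.
Proof.
move=> sX sY; split.
  by case=> _ h x; have := h x; rewrite -/(qf _ x) qfB subr_ge0.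
move=> h; split; first by rewrite raddfB /= sX sY.
by move=> x; rewrite -/(qf _ x) qfB subr_ge0.
Qed.

Lemma lemx_sym n (X Y : 'M[R]_n) : X^T = X -> lemx X Y -> Y^T = Y.
Proof.
move=> sX [sXY _]; move: sXY; rewrite raddfB /= sX => /eqP.
by rewrite subr_eq subrK => /eqP.
Qed.

Lemma pd_psd n (X : 'M[R]_n) : pdmx X -> forall x, 0 <= qf X x.
Proof.
case=> _ h x; have [->|nz] := eqVneq x 0; first by rewrite qf0.
exact/ltW/h.
Qed.

Lemma schur_facts n (a : 'M[R]_1) (c : 'M[R]_(n,1)) (d : 'M[R]_n) :
  pdmx (block_mx a c^T c d) ->
  [/\ 0 < a 0 0, a \in unitmx & pdmx (d - c *m invmx a *m c^T)].
Proof.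
move=> pX; have [sX hX] := pX.
move: (sX); rewrite tr_block_mx trmxK => /eq_block_mx [sa _ _ sd].
have a0 : 0 < a 0 0.
  have -> : a 0 0 = qf a 1%:M by rewrite /qf trmx1 mul1mx mulmx1.
  rewrite -(qf_block_x0 a c^T c d); apply: hX.
  rewrite col_mx_eq0 negb_and; apply/orP; left.
  by apply/eqP => /matrixP /(_ 0 0); rewrite !mxE /= => /eqP; rewrite oner_eq0.
have ua : a \in unitmx by rewrite unitmxE det_mx11 unitfE gt_eqF.
split => //; split.
  by rewrite raddfB /= !trmx_mul trmxK trmx_inv sa sd mulmxA.
move=> y ny; change (0 < qf (d - c *m invmx a *m c^T) y).
have := qf_block_ul a c d (- (invmx a *m c^T *m y)) y sa ua.
rewrite addNr qf0 add0r => <-; apply: hX.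
by rewrite col_mx_eq0 negb_and ny orbT.
Qed.

Lemma det_mono_blk n
  (IH : forall X Y : 'M[R]_n, pdmx X -> lemx X Y -> 0 < \det X /\ \det X <= \det Y)
  (a : 'M[R]_1) (c : 'M[R]_(n,1)) (d : 'M[R]_n) (a' : 'M[R]_1) (c' : 'M[R]_(n,1)) (d' : 'M[R]_n) :
  pdmx (block_mx a c^T c d) -> lemx (block_mx a c^T c d) (block_mx a' c'^T c' d') ->
  0 < \det (block_mx a c^T c d) /\ \det (block_mx a c^T c d) <= \det (block_mx a' c'^T c' d').
Proof.
move=> pX lXY.
have sX : (block_mx a c^T c d)^T = block_mx a c^T c d by case: pX.
have sY := lemx_sym sX lXY.
have hXY := (lemxP sX sY).1 lXY.
have pY : pdmx (block_mx a' c'^T c' d').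
  split => // x nx; apply: (lt_le_trans _ (hXY x)); by case: pX => _; apply.
have [a0 ua pS] := schur_facts pX.
have [a0' ua' pS'] := schur_facts pY.
move: (sX) (sY); rewrite !tr_block_mx !trmxK => /eq_block_mx [sa _ _ _] /eq_block_mx [sa' _ _ _].
have lS : lemx (d - c *m invmx a *m c^T) (d' - c' *m invmx a' *m c'^T).
  apply/lemxP; [by case: pS | by case: pS' |] => y.
  have := qf_block_ul a' c' d' (- (invmx a' *m c'^T *m y)) y sa' ua'.
  rewrite addNr qf0 add0r => <-.
  apply: le_trans (hXY _).
  rewrite qf_block_ul //.
  have h0 : 0 <= qf a (- (invmx a' *m c'^T *m y) + invmx a *m c^T *m y).
    by rewrite -(qf_block_x0 a c^T c d); exact: pd_psd pX _.
  lra.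
have [dS0 dSle] := IH _ _ pS lS.
rewrite !det_block_ul // !det_mx11.
split; first exact: mulr_gt0.
apply: ler_pM; [exact: ltW | exact: ltW | | exact: dSle].
have := hXY (col_mx 1%:M 0); rewrite !qf_block_x0 /qf trmx1 !mul1mx !mulmx1 //.
Qed.

Lemma det_mono n : forall X Y : 'M[R]_n, pdmx X -> lemx X Y -> 0 < \det X /\ \det X <= \det Y.
Proof.
elim: n => [|n IH] X Y pX lXY.
  by rewrite !det_mx00 ltr01 lexx.
have sX : X^T = X by case: pX.
have sY := lemx_sym sX lXY.
have blk : forall Z : 'M[R]_(1 + n), Z^T = Z -> block_mx (ulsubmx Z) (dlsubmx Z)^T (dlsubmx Z) (drsubmx Z) = Z.
  by move=> Z sZ; rewrite trmx_dlsub sZ; exact/submxK.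
pose X' : 'M[R]_(1 + n) := X. pose Y' : 'M[R]_(1 + n) := Y.
have := @det_mono_blk n IH (ulsubmx X') (dlsubmx X') (drsubmx X') (ulsubmx Y') (dlsubmx Y') (drsubmx Y').
rewrite (blk X' sX) (blk Y' sY); exact.
Qed.

Lemma lemx_refl n (X : 'M[R]_n) : lemx X X.
Proof. by rewrite /lemx subrr; split; [rewrite trmx0 | move=> x; rewrite mulmx0 mul0mx mxE]. Qed.

Lemma pd_det n (X : 'M[R]_n) : pdmx X -> 0 < \det X.
Proof. by move=> pX; case: (det_mono pX (lemx_refl X)). Qed.

Lemma pd_unit n (X : 'M[R]_n) : pdmx X -> X \in unitmx.
Proof. by move=> pX; rewrite unitmxE unitfE gt_eqF // pd_det. Qed.

Lemma pd_sym n (X : 'M[R]_n) : pdmx X -> X^T = X.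
Proof. by case. Qed.

Lemma pd_qf n (X : 'M[R]_n) x : pdmx X -> x != 0 -> 0 < qf X x.
Proof. by case=> _ h; apply: h. Qed.

Lemma pd_le n (X Y : 'M[R]_n) : pdmx X -> lemx X Y -> pdmx Y.
Proof.
move=> pX lXY; have sX := pd_sym pX; have sY := lemx_sym sX lXY.
have h := (lemxP sX sY).1 lXY.
by split => // x nx; apply: (lt_le_trans _ (h x)); apply: pd_qf.
Qed.

Lemma lemx_trans n (X Y Z : 'M[R]_n) : X^T = X -> lemx X Y -> lemx Y Z -> lemx X Z.
Proof.
move=> sX lXY lYZ; have sY := lemx_sym sX lXY; have sZ := lemx_sym sY lYZ.
apply/lemxP => // x; apply: le_trans ((lemxP sX sY).1 lXY x) ((lemxP sY sZ).1 lYZ x).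
Qed.

Variable n : nat.
Variables A W : 'M[R]_n.
Hypothesis pW : pdmx W.

Definition Fw (X : 'M[R]_n) := A *m X *m A^T + W.
Definition Sw (X : 'M[R]_n) := X - (A *m X)^T *m invmx (Fw X) *m (A *m X).
Definition Mw (X : 'M[R]_n) := block_mx X (A *m X)^T (A *m X) (Fw X).

Lemma sym_Fw X : X^T = X -> (Fw X)^T = Fw X.
Proof. by move=> sX; rewrite /Fw raddfD /= !trmx_mul trmxK sX (pd_sym pW) mulmxA. Qed.

Lemma qf_Fw X x : qf (Fw X) x = qf X (A^T *m x) + qf W x.
Proof. by rewrite /Fw qfD qf_congr. Qed.

Lemma pd_Fw X : pdmx X -> pdmx (Fw X).
Proof.
move=> pX; split; first exact: sym_Fw (pd_sym pX).
move=> x nx; rewrite -/(qf _ x) qf_Fw.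
have := pd_psd pX (A^T *m x); have := pd_qf pW nx; lra.
Qed.

Lemma Fw_mono X Y : X^T = X -> lemx X Y -> lemx (Fw X) (Fw Y).
Proof.
move=> sX lXY; have sY := lemx_sym sX lXY.
apply/lemxP; [exact: sym_Fw | exact: sym_Fw |] => x.
by rewrite !qf_Fw lerD2r; apply: (lemxP sX sY).1.
Qed.

Lemma qf_Mw X x y : pdmx X ->
  qf (Mw X) (col_mx x y) = qf X (x + A^T *m y) + qf W y.
Proof.
move=> pX; have sX := pd_sym pX; have uX := pd_unit pX.
rewrite /Mw qf_block_ul //.
have -> : invmx X *m (A *m X)^T = A^T.
  by rewrite trmx_mul sX mulmxA mulVmx // mul1mx.
congr (_ + _); congr (qf _ y).
rewrite trmx_mul sX -mulmxA (mulmxA (invmx X)) mulVmx // mul1mx.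
by rewrite /Fw addrAC subrr add0r.
Qed.

Lemma qf_Mw_dr X x y : pdmx X ->
  qf (Mw X) (col_mx x y) = qf (Sw X) x + qf (Fw X) (y + invmx (Fw X) *m (A *m X) *m x).
Proof.
move=> pX; have sX := pd_sym pX; have uF := pd_unit (pd_Fw pX).
by rewrite /Mw qf_block_dr // (pd_sym (pd_Fw pX)).
Qed.

Lemma sym_Sw X : pdmx X -> (Sw X)^T = Sw X.
Proof.
move=> pX; have sX := pd_sym pX.
rewrite /Sw raddfB /= !trmx_mul trmxK trmx_inv (pd_sym (pd_Fw pX)) sX. rewrite -/(X^T) sX !mulmxA. done.
Qed.

Lemma qf_Sw X x : pdmx X ->
  qf (Sw X) x = qf (Mw X) (col_mx x (- (invmx (Fw X) *m (A *m X) *m x))).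
Proof. by move=> pX; rewrite qf_Mw_dr // addNr qf0 addr0. Qed.

Lemma pd_Sw X : pdmx X -> pdmx (Sw X).
Proof.
move=> pX; split; first exact: sym_Sw.
move=> x nx; rewrite -/(qf _ x) qf_Sw // qf_Mw //.
set v := - _.
have := pd_psd pX (x + A^T *m v).
have [->|nv] := eqVneq v 0.
  rewrite mulmx0 addr0 qf0 => _; have := pd_qf pX nx; lra.
have := pd_qf pW nv; lra.
Qed.

Lemma det_Sw X : pdmx X -> \det (Fw X) * \det (Sw X) = \det X * \det W.
Proof.
move=> pX; have sX := pd_sym pX; have uX := pd_unit pX; have uF := pd_unit (pd_Fw pX).
have e1 := det_block_ul (A *m X)^T (A *m X) (Fw X) uX.
have e2 := det_block_dr X (A *m X)^T (A *m X) uF.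
rewrite e2 in e1; rewrite mulrC /Sw e1.
congr (_ * \det _).
rewrite trmx_mul sX -mulmxA (mulmxA (invmx X)) mulVmx // mul1mx.
by rewrite /Fw addrAC subrr add0r.
Qed.

Lemma Sw_mono X Y : pdmx X -> lemx X Y -> lemx (Sw X) (Sw Y).
Proof.
move=> pX lXY; have pY := pd_le pX lXY.
have sX := pd_sym pX; have sY := pd_sym pY; have h := (lemxP sX sY).1 lXY.
apply/lemxP; [exact: sym_Sw | exact: sym_Sw |] => x.
rewrite [qf (Sw Y) x]qf_Sw // qf_Mw //.
set y := - _.
apply: (le_trans _ (_ : qf X (x + A^T *m y) + qf W y <= _)); last by rewrite lerD2r.
rewrite -qf_Mw // qf_Mw_dr //.
have := pd_psd (pd_Fw pX) (y + invmx (Fw X) *m (A *m X) *m x); lra.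
Qed.

Lemma ratio_mono X Y : pdmx X -> lemx X Y ->
  \det (Fw Y) / \det Y <= \det (Fw X) / \det X.
Proof.
move=> pX lXY; have pY := pd_le pX lXY.
have dX := pd_det pX; have dY := pd_det pY.
have dSX := pd_det (pd_Sw pX); have dSY := pd_det (pd_Sw pY).
have dW := pd_det pW.
have [_ le] := det_mono (pd_Sw pX) (Sw_mono pX lXY).
have eX := det_Sw pX; have eY := det_Sw pY.
have -> : \det (Fw X) / \det X = \det W / \det (Sw X).
  have -> : \det (Fw X) = \det X * \det W / \det (Sw X) by rewrite -eX mulfK // gt_eqF.
  by field; rewrite !gt_eqF.
have -> : \det (Fw Y) / \det Y = \det W / \det (Sw Y).
  have -> : \det (Fw Y) = \det Y * \det W / \det (Sw Y) by rewrite -eY mulfK // gt_eqF.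
  by field; rewrite !gt_eqF.
by rewrite ler_pM2l // lef_pV2 // posrE.
Qed.

Lemma feas_Sw X : pdmx X -> lemx X (Fw X) -> vfeasible A W X (Sw X).
Proof.
move=> pX lX; have sX := pd_sym pX; have pF := pd_Fw pX; have sF := pd_sym pF.
have uF := pd_unit pF; have pS := pd_Sw pX; have sS := pd_sym pS.
split => //.
have -> : X *m A^T = (A *m X)^T by rewrite trmx_mul sX.
rewrite -/(Fw X); split.
  by rewrite tr_block_mx trmxK raddfB /= sX sS sF.
move=> v; rewrite -/(qf _ v) -[v]vsubmxK qf_block_dr //.
have -> : X - Sw X - (A *m X)^T *m invmx (Fw X) *m (A *m X) = 0.
  by apply/eqP; rewrite subr_eq0 /Sw opprB addrC subrK.
by rewrite qf0m add0r; apply: pd_psd.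
Qed.

Lemma feas_F2 P Pi : P^T = P -> pdmx Pi ->
  psdmx (block_mx (P - Pi) (P *m A^T) (A *m P) (A *m P *m A^T + W)) ->
  pdmx P /\ lemx Pi (Sw P).
Proof.
move=> sP pPi [_ hM].
have h0 : forall x, 0 <= qf (P - Pi) x.
  by move=> x; rewrite -(qf_block_x0 (P - Pi) (P *m A^T) (A *m P) (A *m P *m A^T + W)); apply: hM.
have pP : pdmx P.
  split => // x nx; rewrite -/(qf _ x); have := h0 x; rewrite qfB.
  have := pd_qf pPi nx; lra.
split => //.
have pF := pd_Fw pP; have sF := pd_sym pF; have uF := pd_unit pF.
apply/lemxP; [exact: pd_sym | exact: sym_Sw |] => x.
have := hM (col_mx x (- (invmx (Fw P) *m (A *m P) *m x))).
rewrite -/(qf _ _).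
have -> : P *m A^T = (A *m P)^T by rewrite trmx_mul sP.
rewrite -/(Fw P) qf_block_dr // addNr qf0 addr0.
by rewrite addrAC -/(Sw P) qfB subr_ge0.
Qed.
End Q.


Section Main.
Variable R : realType.

Lemma lnMp (x y : R) : 0 < x -> 0 < y -> ln (x * y) = ln x + ln y.
Proof. by move=> hx hy; rewrite lnM ?posrE. Qed.
Lemma lnVp (x : R) : 0 < x -> ln (x^-1) = - ln x.
Proof. by move=> hx; rewrite lnV ?posrE. Qed.
Lemma ler_lnp (x y : R) : 0 < x -> 0 < y -> x <= y -> ln x <= ln y.
Proof. by move=> hx hy; rewrite ler_ln ?posrE. Qed.

Lemma bernoulli (q : R) N : 1 <= q -> 1 + N%:R * (q - 1) <= q ^+ N.
Proof.
move=> q1; elim: N => [|N IH]; first by rewrite expr0 mul0r addr0.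
rewrite exprS -natr1.
have h0 : 0 <= N%:R :> R by apply: ler0n.
have h1 : 0 <= (q - 1) * (q ^+ N - (1 + N%:R * (q - 1))) by apply: mulr_ge0; lra.
have h2 : 0 <= N%:R * ((q - 1) * (q - 1)) by apply: mulr_ge0 => //; apply: mulr_ge0; lra.
nra.
Qed.

Lemma lemx_W12 n (A W1 W2 X : 'M[R]_n) : pdmx W1 -> lemx W1 W2 -> X^T = X ->
  lemx (Fw A W1 X) (Fw A W2 X).
Proof.
move=> pW1 lW sX; have pW2 := pd_le pW1 lW.
have h := (lemxP (pd_sym pW1) (pd_sym pW2)).1 lW.
apply/lemxP; [exact: sym_Fw | exact: sym_Fw |] => x.
by rewrite !qf_Fw lerD2l.
Qed.

Lemma vobjE n (W Pi : 'M[R]_n) : pdmx W -> pdmx Pi ->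
  vobj W Pi = (ln (\det W) - ln (\det Pi)) / (2 * ln 2).
Proof.
move=> pW pPi; rewrite /vobj /log2 det_inv lnVp; last exact: pd_det.
have l2 : ln (2 : R) != 0 by rewrite gt_eqF // ln_gt0 // ltr1n.
by field.
Qed.


Lemma core n (A W1 W2 P Pi : 'M[R]_n) (e : R) : pdmx W1 -> lemx W1 W2 ->
  vfeasible A W2 P Pi -> 0 < e ->
  exists P' Pi', vfeasible A W1 P' Pi' /\ vobj W1 Pi' <= vobj W2 Pi + e.
Proof.
move=> pW1 lW [sP sPi pPi lP bM] e0.
have pW2 := pd_le pW1 lW.
have [pP lPi] := feas_F2 pW2 sP pPi bM.
have sW1 := pd_sym pW1.
pose Pk k := iter k (Fw A W1) W1.
pose Qk k := iter k (Fw A W2) P.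
have pdPk : forall k, pdmx (Pk k).
  by elim=> [|k IH] //=; exact: pd_Fw.
have lPk : forall k, lemx (Pk k) (Pk k.+1).
  elim=> [|k IH].
    apply/lemxP => //=; first exact: sym_Fw.
    move=> x; rewrite qf_Fw; have := pd_psd pW1 (A^T *m x); lra.
  exact: (Fw_mono A pW1 (pd_sym (pdPk k)) IH).
have hQ : forall k, [/\ pdmx (Qk k), lemx P (Qk k) & lemx (Qk k) (Qk k.+1)].
  elim=> [|k [pq lpq lqq]]; first by split => //; exact: lemx_refl.
  split; first exact: pd_le pq lqq.
    exact: lemx_trans sP lpq lqq.
  exact: (Fw_mono A pW2 (pd_sym pq) lqq).
have lPQ : forall k, lemx (Pk k) (Qk k.+1).
  elim=> [|k IH].
    have [pq1 _ _] := hQ 1%N.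
    apply/lemxP => //=; first exact: (pd_sym pq1).
    move=> x; rewrite qf_Fw; have := pd_psd pP (A^T *m x).
    have := (lemxP sW1 (pd_sym pW2)).1 lW x; lra.
  have [pq1 _ _] := hQ k.+1.
  apply: (lemx_trans (pd_sym (pdPk k.+1)) (Fw_mono A pW1 (pd_sym (pdPk k)) IH)).
  exact: lemx_W12 (pd_sym pq1).
pose r2 := \det (Fw A W2 P) / \det P.
have dP := pd_det pP; have dW1 := pd_det pW1.
have r2p : 0 < r2 by apply: divr_gt0 => //; apply: pd_det; exact: pd_Fw.
have l2 : 0 < ln (2 : R) by rewrite ln_gt0 // ltr1n.
pose q := expR (2 * e * ln 2).
have q1 : 1 < q by rewrite /q expR_gt1; apply: mulr_gt0 => //; apply: mulr_gt0.
have [k hk] : exists k, \det (Pk k.+1) / \det (Pk k) <= r2 * q.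
  case: (pselect (exists k, \det (Pk k.+1) / \det (Pk k) <= r2 * q)) => // H.
  exfalso.
  have H' : forall k, r2 * q <= \det (Pk k.+1) / \det (Pk k).
    move=> k; case: (leP (r2 * q) (\det (Pk k.+1) / \det (Pk k))) => // /ltW h.
    by exfalso; apply: H; exists k.
  have detQ : forall k, \det (Qk k) <= \det P * r2 ^+ k.
    elim=> [|k IH]; first by rewrite expr0 mulr1.
    have [pq lpq _] := hQ k.
    have dq := pd_det pq.
    have -> : \det (Qk k.+1) = \det (Fw A W2 (Qk k)) / \det (Qk k) * \det (Qk k).
      by rewrite divfK // gt_eqF.
    rewrite exprS mulrCA.
    apply: ler_pM => //.
    - by apply: ltW; apply: divr_gt0 => //; apply: pd_det; apply: pd_Fw.
    - exact: (ltW dq).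
    apply: le_trans (ratio_mono A pW2 pP lpq) _; rewrite /r2; exact: lexx.
  have detP : forall k, \det W1 * (r2 * q) ^+ k <= \det (Pk k).
    elim=> [|k IH]; first by rewrite expr0 mulr1.
    have dk := pd_det (pdPk k).
    have -> : \det (Pk k.+1) = \det (Pk k.+1) / \det (Pk k) * \det (Pk k).
      by rewrite divfK // gt_eqF.
    rewrite exprS mulrCA.
    apply: ler_pM => //.
    - by apply: ltW; apply: mulr_gt0 => //; apply: lt_trans q1.
    - by apply: ltW; apply: mulr_gt0 => //; apply: exprn_gt0; apply: mulr_gt0 => //; apply: lt_trans q1.
  pose K := \det P * r2 / \det W1.
  pose N := (Num.Def.trunc (K / (q - 1))).+1.
  have NK : K / (q - 1) < N%:R by apply: truncnS_gt.
  have hB := bernoulli N (ltW q1).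
  have [_ hPQ] := det_mono (pdPk N) (lPQ N).
  have c1 := le_trans (le_trans (detP N) hPQ) (detQ N.+1).
  clearbody N.
  rewrite exprMn exprS in c1.
  have aN : 0 < r2 ^+ N by apply: exprn_gt0.
  have qN : q ^+ N * \det W1 <= \det P * r2.
    rewrite -(ler_pM2l aN); move: c1; rewrite mulrA [_ * r2 ^+ N]mulrC; lra.
  have : K < N%:R * (q - 1) by rewrite -ltr_pdivrMr // subr_gt0.
  have : q ^+ N <= K by rewrite /K ler_pdivlMr.
  lra.
exists (Pk k), (Sw A W1 (Pk k)); split.
  apply: (feas_Sw pW1 (pdPk k)); exact: (lPk k).
have pk := pdPk k; have dk := pd_det pk.
have pS1 := pd_Sw A pW1 pk; have pF1 := pd_Fw A pW1 pk.
have pS2 := pd_Sw A pW2 pP; have pF2 := pd_Fw A pW2 pP.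
have e1 := det_Sw A pW1 pk; have e2 := det_Sw A pW2 pP.
have [_ dPiS] := det_mono pPi lPi.
have dS1 := pd_det pS1; have dF1 := pd_det pF1; have dS2 := pd_det pS2; have dF2 := pd_det pF2.
have dW2 := pd_det pW2; have dPi := pd_det pPi.
rewrite !vobjE //.
have L1 := congr1 (@ln R) e1; rewrite !lnMp // in L1.
have L2 := congr1 (@ln R) e2; rewrite !lnMp // in L2.
have L3 := ler_lnp dPi dS2 dPiS.
have L4 : ln (\det (Fw A W1 (Pk k))) - ln (\det (Pk k)) <= ln (\det (Fw A W2 P)) - ln (\det P) + 2 * e * ln 2.
  have := ler_lnp _ _ hk.
  rewrite /r2 /q !lnMp ?lnVp ?expRK //; last 3 first.
  - by rewrite invr_gt0.
  - exact: expR_gt0.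
  - by rewrite invr_gt0.
  move=> h; apply: h; first by apply: divr_gt0.
  by apply: mulr_gt0; [apply: divr_gt0 | exact: expR_gt0].
have key : forall a b : R, a <= b + 2 * e * ln 2 -> a / (2 * ln 2) <= b / (2 * ln 2) + e.
  move=> a b hab.
  have -> : b / (2 * ln 2) + e = (b + 2 * e * ln 2) / (2 * ln 2).
    by field; rewrite gt_eqF.
  by rewrite ler_pM2r ?invr_gt0 ?mulr_gt0.
apply: key; lra.
Qed.
End Main.

Unset Implicit Arguments.

Theorem lemma12 (R : realType) (n : nat) (A W1 W2 : 'M[R]_n) :
  pdmx W1 -> lemx W1 W2 -> (vstar A W1 <= vstar A W2)%E.
Proof.
move=> pW1 lW.
apply/ereal_infP => y [P [Pi [feas ->]]].
apply/lee_addgt0Pr => e e0.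
have [P' [Pi' [f' hle]]] := core pW1 lW feas e0.
apply: (@le_trans _ _ (vobj W1 Pi')%:E).
  by apply: ereal_inf_lbound; exists P', Pi'.
by rewrite -EFinD lee_fin.
Qed.
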